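(* Let $\mathcal{C}$ be a $\beta$-avoiding simplicial complex and let $G$ be its $1$-skeleton. Then $G$ is one of the following: (a) a complete graph $K_N$; (b) two complete graphs glued along a (possibly empty) common clique; (c) an iterated cone over a $4$-cycle, i.e. the join of a $4$-cycle with a complete graph $K_p$ for some $p\ge0$.
   Context: A simplicial complex on a finite ground set $V$ is a family of subsets of $V$ closed under subsets; a vertex $v$ is non-ghost if $\{v\}\in\mathcal{C}$. The $1$-skeleton of $\mathcal{C}$ is the graph whose vertices are the non-ghost vertices and whose edges are the $2$-element faces. For $S\subseteq V$, $\mathcal{C}\setminus S$ is the induced subcomplex $\{F\in\mathcal{C}:F\cap S=\emptyset\}$ on $V\setminus S$; for a face $R$, $\operatorname{link}_R(\mathcal{C})=\{F\setminus R: R\subseteq F\in\mathcal{C}\}$ on $V\setminus R$. A minor is $\operatorname{link}_R(\mathcal{C}\setminus S)$ with $S\cap R=\emptyset$, $R$ a face. Alexander dual of $\mathcal{D}$ on $V$: $\{S\subseteq V: V\setminus S\notin\mathcal{D}\}$. $\mathcal{C}$ is $\beta$-avoiding if no minor is isomorphic (via a bijection of ground sets carrying faces to faces) to any of: $P_4$ (on $\{1,2,3,4\}$, facets $12,23,34$); $O_6$ (on $\{1,\dots,6\}$, faces the subsets containing none of $\{1,2\},\{3,4\},\{5,6\}$) or its dual $O_6^*$; $J_1$ (on $\{1,\dots,5\}$, facets $12,15,234,345$) or $J_1^*$ (facets $134,235,245$); $J_2$ (on $\{1,\dots,5\}$, facets $12,235,34,145$); $\partial\Delta_n\sqcup\{v\}$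 for $n\ge1$ (all proper subsets of an $(n+1)$-set together with one extra isolated vertex). *)

(* Defs.v *)
From mathcomp Require Import all_boot.
Set Implicit Arguments. Unset Strict Implicit. Unset Printing Implicit Defensive.

(* A simplicial complex on the finite ground set V (= all of the finType V)
   is a family of subsets closed under taking subsets. *)
Definition is_complex (V : finType) (C : {set {set V}}) : Prop :=
  forall F G : {set V}, F \in C -> G \subset F -> G \in C.

(* The minor link_R (C \ S), a complex on the ground set V \ (S u R). *)
Definition minor_ground (V : finType) (S R : {set V}) : {set V} := ~: (S :|: R).
Definition minor_faces (V : finType) (C : {set {set V}}) (S R : {set V})
  : {set {set V}} :=
  [set F :\: R | F in [set F in C | (R \subset F) && [disjoint F & S]]].

Definition iso_to (n : nat) (K : {set {set 'I_n}}) (V : finType)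
  (W : {set V}) (D : {set {set V}}) : Prop :=
  exists f : 'I_n -> V, [/\ injective f, f @: setT = W &
     forall F : {set 'I_n}, (F \in K) = (f @: F \in D)].

Definition o {n : nat} (k : nat) : 'I_n.+1 := inord k.

Definition gen (n : nat) (facets : seq {set 'I_n}) : {set {set 'I_n}} :=
  [set F : {set 'I_n} | has (fun G : {set 'I_n} => F \subset G) facets].

Definition adual (n : nat) (K : {set {set 'I_n}}) : {set {set 'I_n}} :=
  [set S : {set 'I_n} | (~: S) \notin K].

(* vertices 1..k of the paper are 0..k-1 here *)
Definition P4 : {set {set 'I_4}} :=
  gen [:: [set o 0; o 1]; [set o 1; o 2]; [set o 2; o 3]].
Definition O6 : {set {set 'I_6}} :=
  [set F : {set 'I_6} | ~~ ([set o 0; o 1] \subset F) && ~~ ([set o 2; o 3] \subset F)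
                        && ~~ ([set o 4; o 5] \subset F)].
Definition O6dual : {set {set 'I_6}} := adual O6.
Definition J1 : {set {set 'I_5}} :=
  gen [:: [set o 0; o 1]; [set o 0; o 4]; [set o 1; o 2; o 3]; [set o 2; o 3; o 4]].
Definition J1dual : {set {set 'I_5}} :=
  gen [:: [set o 0; o 2; o 3]; [set o 1; o 2; o 4]; [set o 1; o 3; o 4]].
Definition J2 : {set {set 'I_5}} :=
  gen [:: [set o 0; o 1]; [set o 1; o 2; o 4]; [set o 2; o 3]; [set o 0; o 3; o 4]].
(* boundary of the n-simplex on {0..n} plus the isolated vertex n+1 *)
Definition bdry_plus_pt (n : nat) : {set {set 'I_n.+2}} :=
  [set F : {set 'I_n.+2} | (F \proper [set i : 'I_n.+2 | i != ord_max])
                           || (F == [set ord_max])].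

Definition beta_avoiding (V : finType) (C : {set {set V}}) : Prop :=
  forall S R : {set V}, R \in C -> [disjoint S & R] ->
    let W := minor_ground S R in
    let D := minor_faces C S R in
    ~ iso_to P4 W D /\ ~ iso_to O6 W D /\ ~ iso_to O6dual W D /\
    ~ iso_to J1 W D /\ ~ iso_to J1dual W D /\ ~ iso_to J2 W D /\
    (forall n, 1 <= n -> ~ iso_to (bdry_plus_pt n) W D).

Definition nonghost (V : finType) (C : {set {set V}}) : {set V} :=
  [set v | [set v] \in C].
Definition edge (V : finType) (C : {set {set V}}) (u v : V) : bool :=
  (u != v) && ([set u; v] \in C).

(* Main.v *)
Require Import Defs.
From mathcomp Require Import all_boot.
From Stdlib Require Import Btauto.
Set Implicit Arguments. Unset Strict Implicit. Unset Printing Implicit Defensive.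

Lemma oval n k : k <= n -> nat_of_ord (@o n k) = k.
Proof. by move=> h; rewrite /o inordK. Qed.

Lemma oeq n i j : i <= n -> j <= n -> (@o n i == @o n j) = (i == j).
Proof. by move=> hi hj; rewrite -val_eqE /= !oval. Qed.

Lemma subE n (A B : {set 'I_n}) : (A \subset B) = all (fun i => (i \in A) ==> (i \in B)) (enum 'I_n).
Proof.
apply/subsetP/allP => H i.
  by move=> _; apply/implyP; apply: H.
by move=> hA; move: (H i (mem_enum _ i)) => /implyP; apply.
Qed.

Lemma enum3 : enum 'I_3 = [:: o 0; o 1; o 2].
Proof. apply: (inj_map val_inj). by rewrite val_enum_ord /= !oval. Qed.
Lemma enum4 : enum 'I_4 = [:: o 0; o 1; o 2; o 3].
Proof. apply: (inj_map val_inj). by rewrite val_enum_ord /= !oval. Qed.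
Lemma enum5 : enum 'I_5 = [:: o 0; o 1; o 2; o 3; o 4].
Proof. apply: (inj_map val_inj). by rewrite val_enum_ord /= !oval. Qed.
Lemma enum6 : enum 'I_6 = [:: o 0; o 1; o 2; o 3; o 4; o 5].
Proof. apply: (inj_map val_inj). by rewrite val_enum_ord /= !oval. Qed.

Section Fw.
Lemma disjointP (V : finType) (A B : {set V}) :
  reflect (forall x, x \in A -> x \in B -> False) [disjoint A & B].
Proof.
rewrite disjoints_subset; apply: (iffP subsetP) => H x hA.
  by move=> hB; move: (H x hA); rewrite inE hB.
by rewrite inE; apply/negP => hB; apply: (H x hA hB).
Qed.
Lemma face_char (V : finType) (C : {set {set V}}) (I R X : {set V}) :
  [disjoint I & R] -> X \subset I ->
  (X \in minor_faces C (~: (I :|: R)) R) = (X :|: R \in C).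
Proof.
move=> /disjointP dIR /subsetP XI.
rewrite /minor_faces; apply/imsetP/idP.
  case=> G; rewrite inE => /andP[GC /andP[/subsetP RG _]] ->.
  suff -> : G :\: R :|: R = G by [].
  apply/setP => z; rewrite !inE; case: (boolP (z \in R)) => hz /=.
    by rewrite (RG _ hz).
  by rewrite orbF.
move=> hX; exists (X :|: R).
  rewrite inE hX subsetUr /=; apply/disjointP => z; rewrite !inE.
  case/orP=> hz; first by rewrite (XI _ hz).
  by rewrite hz orbT.
apply/setP => z; rewrite !inE; case: (boolP (z \in R)) => hz /=.
  by apply/negP => /XI hI; apply: (dIR z hI hz).
by rewrite orbF.
Qed.

Lemma by_lists n (K : {set {set 'I_n}}) (g : {set 'I_n} -> bool) (fa nf : seq {set 'I_n}) :
  (forall A B : {set 'I_n}, A \subset B -> g B -> g A) ->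
  (forall F, (F \notin K) || has (fun G : {set 'I_n} => F \subset G) fa) ->
  (forall F, (F \in K) || has (fun M : {set 'I_n} => M \subset F) nf) ->
  all g fa -> all (fun M => ~~ g M) nf -> forall F, (F \in K) = g F.
Proof.
move=> mono h1 h2 /allP a1 /allP a2 F.
apply/idP/idP.
  move=> FK; move: (h1 F); rewrite FK /= => /hasP[G GI FG].
  exact: (mono _ _ FG (a1 _ GI)).
move=> gF; move: (h2 F); case: (F \in K) => //= /hasP[M MI MF].
by move: (a2 _ MI); rewrite (mono _ _ MF gF).
Qed.

Lemma forbid_core (V : finType) (C : {set {set V}}) n (K : {set {set 'I_n}}) (R : {set V})
   (s : seq V) (a : V) (fa nf : seq {set 'I_n}) :
 is_complex C -> uniq s -> size s = n -> [disjoint [set x in s] & R] ->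
 (forall F : {set 'I_n}, (F \notin K) || has (fun G : {set 'I_n} => F \subset G) fa) ->
 (forall F : {set 'I_n}, (F \in K) || has (fun M : {set 'I_n} => M \subset F) nf) ->
 all (fun G : {set 'I_n} => (fun i : 'I_n => nth a s i) @: G :|: R \in C) fa ->
 all (fun M : {set 'I_n} => (fun i : 'I_n => nth a s i) @: M :|: R \notin C) nf ->
 exists S : {set V}, [disjoint S & R] /\ iso_to K (minor_ground S R) (minor_faces C S R).
Proof.
move=> hC us ss dsR h1 h2 a1 a2.
set f := (fun i : 'I_n => nth a s i).
have dIR : [disjoint f @: setT & R].
  apply: disjointWl dsR; apply/subsetP => z /imsetP[i _ ->].
  by rewrite inE /f mem_nth // ss.
exists (~: (f @: setT :|: R)); split.
  apply/disjointP => z; rewrite !inE => /norP[_ h] hz; by rewrite hz in h.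
exists f; split.
- move=> i j /eqP; rewrite /f nth_uniq ?ss // => /eqP; exact: val_inj.
- move/disjointP: dIR => dIR.
  apply/setP => z; rewrite /minor_ground !inE.
  case: (boolP (z \in f @: setT)) => hz /=.
    by apply/esym/negP => hR; apply: (dIR z hz hR).
  by case: (z \in R).
- move=> F; rewrite face_char //; last by apply: imsetS; apply: subsetT.
  apply: (by_lists (g := fun F => f @: F :|: R \in C) _ h1 h2 a1 a2).
  move=> A B AB /= hB; apply: (hC _ _ hB); apply: setSU; exact: imsetS.
Qed.
End Fw.

Ltac gsimp := rewrite /= ?imsetU ?imsetU1 ?imset_set1 ?oval //= ?setU0.

Lemma disj0 (V : finType) (A : {set V}) : [disjoint A & set0].
Proof. by rewrite disjoints_subset setC0 subsetT. Qed.

Lemma no_ind3 (V : finType) (C : {set {set V}}) (R : {set V}) (x y z : V) :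
  is_complex C -> beta_avoiding C -> R \in C -> uniq [:: x; y; z] ->
  [disjoint [set w in [:: x; y; z]] & R] ->
  [set x] :|: R \in C -> [set y] :|: R \in C -> [set z] :|: R \in C ->
  [set x; y] :|: R \notin C -> [set x; z] :|: R \notin C -> [set y; z] :|: R \notin C -> False.
Proof.
move=> hC hB hR u d h1 h2 h3 h4 h5 h6.
have om : (ord_max : 'I_3) = o 2 by apply: val_inj; rewrite /= oval.
have H : exists S : {set V}, [disjoint S & R] /\ iso_to (bdry_plus_pt 1) (minor_ground S R) (minor_faces C S R).
  apply: (@forbid_core V C 3 (bdry_plus_pt 1) R [:: x; y; z] x
   [:: [set o 0]; [set o 1]; [set o 2]] [:: [set o 0; o 1]; [set o 0; o 2]; [set o 1; o 2]]
   hC u erefl d).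
- move=> F; rewrite inE om properE eqEsubset /= !subE enum3 /= !inE !oeq //=.
  move: (o 0 \in F) (o 1 \in F) (o 2 \in F); by do 3! case.
- move=> F; rewrite inE om properE eqEsubset /= !subE enum3 /= !inE !oeq //=.
  move: (o 0 \in F) (o 1 \in F) (o 2 \in F); by do 3! case.
- by gsimp; rewrite h1 h2 h3.
- by gsimp; rewrite h4 h5 h6.
case: H => S [dS iso].
have [_ [_ [_ [_ [_ [_ H]]]]]] := hB S R hR dS.
exact: (H 1 isT iso).
Qed.

Lemma no_P4 (V : finType) (C : {set {set V}}) (R : {set V}) (x1 x2 x3 x4 : V) :
  is_complex C -> beta_avoiding C -> R \in C -> uniq [:: x1; x2; x3; x4] ->
  [disjoint [set w in [:: x1; x2; x3; x4]] & R] ->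
  [set x1; x2] :|: R \in C -> [set x2; x3] :|: R \in C -> [set x3; x4] :|: R \in C ->
  [set x1; x3] :|: R \notin C -> [set x1; x4] :|: R \notin C -> [set x2; x4] :|: R \notin C -> False.
Proof.
move=> hC hB hR u d h1 h2 h3 h4 h5 h6.
have H : exists S : {set V}, [disjoint S & R] /\ iso_to P4 (minor_ground S R) (minor_faces C S R).
  apply: (@forbid_core V C 4 P4 R [:: x1; x2; x3; x4] x1
   [:: [set o 0; o 1]; [set o 1; o 2]; [set o 2; o 3]]
   [:: [set o 0; o 2]; [set o 0; o 3]; [set o 1; o 3]]
   hC u erefl d).
- move=> F; rewrite inE /= !subE enum4 /= !inE !oeq //=.
  move: (o 0 \in F) (o 1 \in F) (o 2 \in F) (o 3 \in F); by do 4! case.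
- move=> F; rewrite inE /= !subE enum4 /= !inE !oeq //=.
  move: (o 0 \in F) (o 1 \in F) (o 2 \in F) (o 3 \in F); by do 4! case.
- by gsimp; rewrite h1 h2 h3.
- by gsimp; rewrite h4 h5 h6.
case: H => S [dS iso].
have [H _] := hB S R hR dS.
exact: (H iso).
Qed.

Lemma no_J1 (V : finType) (C : {set {set V}}) (x0 x1 x2 x3 x4 : V) :
  is_complex C -> beta_avoiding C -> set0 \in C -> uniq [:: x0; x1; x2; x3; x4] ->
  [set x0; x1] \in C -> [set x0; x4] \in C -> [set x1; x2; x3] \in C -> [set x2; x3; x4] \in C ->
  [set x0; x2] \notin C -> [set x0; x3] \notin C -> [set x1; x4] \notin C -> False.
Proof.
move=> hC hB hR u h1 h2 h3 h4 h5 h6 h7.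
have H : exists S : {set V}, [disjoint S & set0] /\ iso_to J1 (minor_ground S set0) (minor_faces C S set0).
  apply: (@forbid_core V C 5 J1 set0 [:: x0; x1; x2; x3; x4] x0
   [:: [set o 0; o 1]; [set o 0; o 4]; [set o 1; o 2; o 3]; [set o 2; o 3; o 4]]
   [:: [set o 0; o 2]; [set o 0; o 3]; [set o 1; o 4]]
   hC u erefl (disj0 _)).
- move=> F; rewrite inE /= !subE enum5 /= !inE !oeq //=.
  move: (o 0 \in F) (o 1 \in F) (o 2 \in F) (o 3 \in F) (o 4 \in F); by do 5! case.
- move=> F; rewrite inE /= !subE enum5 /= !inE !oeq //=.
  move: (o 0 \in F) (o 1 \in F) (o 2 \in F) (o 3 \in F) (o 4 \in F); by do 5! case.
- by gsimp; rewrite h1 h2 h3 h4.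
- by gsimp; rewrite h5 h6 h7.
case: H => S [dS iso].
have [_ [_ [_ [H _]]]] := hB S set0 hR dS.
exact: (H iso).
Qed.

Lemma no_J2 (V : finType) (C : {set {set V}}) (x0 x1 x2 x3 x4 : V) :
  is_complex C -> beta_avoiding C -> set0 \in C -> uniq [:: x0; x1; x2; x3; x4] ->
  [set x0; x1] \in C -> [set x1; x2; x4] \in C -> [set x2; x3] \in C -> [set x0; x3; x4] \in C ->
  [set x0; x2] \notin C -> [set x1; x3] \notin C -> [set x0; x1; x4] \notin C ->
  [set x2; x3; x4] \notin C -> False.
Proof.
move=> hC hB hR u h1 h2 h3 h4 h5 h6 h7 h8.
have H : exists S : {set V}, [disjoint S & set0] /\ iso_to J2 (minor_ground S set0) (minor_faces C S set0).
  apply: (@forbid_core V C 5 J2 set0 [:: x0; x1; x2; x3; x4] x0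
   [:: [set o 0; o 1]; [set o 1; o 2; o 4]; [set o 2; o 3]; [set o 0; o 3; o 4]]
   [:: [set o 0; o 2]; [set o 1; o 3]; [set o 0; o 1; o 4]; [set o 2; o 3; o 4]]
   hC u erefl (disj0 _)).
- move=> F; rewrite inE /= !subE enum5 /= !inE !oeq //=.
  move: (o 0 \in F) (o 1 \in F) (o 2 \in F) (o 3 \in F) (o 4 \in F); by do 5! case.
- move=> F; rewrite inE /= !subE enum5 /= !inE !oeq //=.
  move: (o 0 \in F) (o 1 \in F) (o 2 \in F) (o 3 \in F) (o 4 \in F); by do 5! case.
- by gsimp; rewrite h1 h2 h3 h4.
- by gsimp; rewrite h5 h6 h7 h8.
case: H => S [dS iso].
have [_ [_ [_ [_ [_ [H _]]]]]] := hB S set0 hR dS.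
exact: (H iso).
Qed.

Lemma no_O6 (V : finType) (C : {set {set V}}) (x0 x1 x2 x3 x4 x5 : V) :
  is_complex C -> beta_avoiding C -> set0 \in C -> uniq [:: x0; x1; x2; x3; x4; x5] ->
  [set x0; x2; x4] \in C -> [set x0; x2; x5] \in C -> [set x0; x3; x4] \in C -> [set x0; x3; x5] \in C ->
  [set x1; x2; x4] \in C -> [set x1; x2; x5] \in C -> [set x1; x3; x4] \in C -> [set x1; x3; x5] \in C ->
  [set x0; x1] \notin C -> [set x2; x3] \notin C -> [set x4; x5] \notin C -> False.
Proof.
move=> hC hB hR u h1 h2 h3 h4 h5 h6 h7 h8 h9 h10 h11.
have H : exists S : {set V}, [disjoint S & set0] /\ iso_to O6 (minor_ground S set0) (minor_faces C S set0).
  apply: (@forbid_core V C 6 O6 set0 [:: x0; x1; x2; x3; x4; x5] x0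
   [:: [set o 0; o 2; o 4]; [set o 0; o 2; o 5]; [set o 0; o 3; o 4]; [set o 0; o 3; o 5];
       [set o 1; o 2; o 4]; [set o 1; o 2; o 5]; [set o 1; o 3; o 4]; [set o 1; o 3; o 5]]
   [:: [set o 0; o 1]; [set o 2; o 3]; [set o 4; o 5]]
   hC u erefl (disj0 _)).
- move=> F; rewrite inE /= !subE enum6 /= !inE !oeq //=.
  move: (o 0 \in F) (o 1 \in F) (o 2 \in F) (o 3 \in F) (o 4 \in F) (o 5 \in F); by do 6! case.
- move=> F; rewrite inE /= !subE enum6 /= !inE !oeq //=.
  move: (o 0 \in F) (o 1 \in F) (o 2 \in F) (o 3 \in F) (o 4 \in F) (o 5 \in F); by do 6! case.
- by gsimp; rewrite h1 h2 h3 h4 h5 h6 h7 h8.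
- by gsimp; rewrite h9 h10 h11.
case: H => S [dS iso].
have [_ [H _]] := hB S set0 hR dS.
exact: (H iso).
Qed.

Ltac setsolve := apply/setP => ?; rewrite !inE; btauto.

Lemma inC_eq (V : finType) (C : {set {set V}}) (X Y : {set V}) : Y \in C -> X = Y -> X \in C.
Proof. by move=> h ->. Qed.
Lemma notinC_eq (V : finType) (C : {set {set V}}) (X Y : {set V}) : Y \notin C -> X = Y -> X \notin C.
Proof. by move=> h ->. Qed.
Lemma sub_notin (V : finType) (C : {set {set V}}) (X Y : {set V}) :
  is_complex C -> X \notin C -> X :|: Y = Y -> Y \notin C.
Proof. move=> hC hX hXY; apply/negP => hY; move/negP: hX; apply; apply: (hC _ _ hY); apply/setUidPr; exact hXY. Qed.
Lemma sub_in (V : finType) (C : {set {set V}}) (X Y : {set V}) :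
  is_complex C -> Y \in C -> X :|: Y = Y -> X \in C.
Proof. move=> hC hY hXY; apply: (hC _ _ hY); apply/setUidPr; exact hXY. Qed.

Lemma edge_neq (V : finType) (C : {set {set V}}) u v : edge C u v -> u != v.
Proof. by case/andP. Qed.
Lemma edge_in (V : finType) (C : {set {set V}}) u v : edge C u v -> [set u; v] \in C.
Proof. by case/andP. Qed.
Lemma edge_sym (V : finType) (C : {set {set V}}) u v : edge C u v = edge C v u.
Proof. by rewrite /edge eq_sym setUC. Qed.
Lemma nedge_notin (V : finType) (C : {set {set V}}) u v : u != v -> ~~ edge C u v -> [set u; v] \notin C.
Proof. by rewrite /edge => ->. Qed.

Ltac neqt := first [ assumption | by rewrite eq_sym | by apply: edge_neq; eassumption
                   | by rewrite eq_sym; apply: edge_neq; eassumption ].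
Ltac uniqt := rewrite /= ?inE ?negb_or; repeat (apply/andP; split); try done; neqt.
Ltac esolve := first [ eassumption | rewrite edge_sym; eassumption ].
Ltac byeq H := apply: (inC_eq H); setsolve.
Ltac byeqN H := apply: (notinC_eq H); setsolve.
Ltac bysub hC H := apply: (sub_notin hC H); setsolve.
Ltac edin := match goal with H : is_true (edge _ ?u ?v) |- _ => apply: (inC_eq (edge_in H)); setsolve end.
Ltac nedin hC := match goal with H : is_true (~~ edge _ ?u ?v) |- _ =>
  apply: (sub_notin hC (nedge_notin _ H)); try setsolve; neqt end.

Ltac fsolve := first [ assumption | rewrite edge_sym; assumption ].
Ltac fromhyp := match goal with
  | H : is_true (?X \in ?C) |- is_true (_ \in ?C) => apply: (inC_eq H); setsolve
  | H : is_true (?X \notin ?C) |- is_true (_ \notin ?C) => apply: (notinC_eq H); setsolve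
  end.
Ltac subin hC := match goal with
  | H : is_true (edge _ ?u ?v) |- _ => apply: (sub_in hC (edge_in H)); setsolve
  | H : is_true (?Y \in ?C) |- is_true (_ \in ?C) => apply: (sub_in hC H); setsolve
  end.
Ltac closer hC := first [ done | esolve | neqt | fsolve | edin | fromhyp | nedin hC | subin hC
   | (apply: nedge_notin; [neqt | fsolve]) ].

Section G.
Variables (V : finType) (C : {set {set V}}).
Hypotheses (hC : is_complex C) (hB : beta_avoiding C).

Lemma set0C x : [set x] \in C -> set0 \in C.
Proof. move=> h; exact: (hC h (sub0set _)). Qed.

Lemma ind3_0 x y z : [set x] \in C -> [set y] \in C -> [set z] \in C ->
  x != y -> x != z -> y != z -> ~~ edge C x y -> ~~ edge C x z -> ~~ edge C y z -> False.
Proof.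
move=> hx hy hz nxy nxz nyz exy exz eyz.
apply: (no_ind3 (R := set0) (x := x) (y := y) (z := z) hC hB (set0C hx)); rewrite ?setU0 //.
- uniqt.
- exact: disj0.
- exact: nedge_notin.
- exact: nedge_notin.
- exact: nedge_notin.
Qed.

Lemma P4_0 x1 x2 x3 x4 : edge C x1 x2 -> edge C x2 x3 -> edge C x3 x4 ->
  x1 != x3 -> x1 != x4 -> x2 != x4 ->
  ~~ edge C x1 x3 -> ~~ edge C x1 x4 -> ~~ edge C x2 x4 -> False.
Proof.
move=> e12 e23 e34 n13 n14 n24 f13 f14 f24.
have h0 : set0 \in C by apply: (hC (edge_in e12)); exact: sub0set.
apply: (no_P4 (R := set0) (x1 := x1) (x2 := x2) (x3 := x3) (x4 := x4) hC hB h0); rewrite ?setU0.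
- uniqt.
- exact: disj0.
- exact: edge_in.
- exact: edge_in.
- exact: edge_in.
- exact: nedge_notin.
- exact: nedge_notin.
- exact: nedge_notin.
Qed.

Lemma ind3_link v x y z : edge C v x -> edge C v y -> edge C v z ->
  x != y -> x != z -> y != z ->
  [set v; x; y] \notin C -> [set v; x; z] \notin C -> [set v; y; z] \notin C -> False.
Proof.
move=> ex ey ez nxy nxz nyz t1 t2 t3.
have h0 : [set v] \in C by apply: (hC (edge_in ex)); rewrite sub1set !inE eqxx.
apply: (no_ind3 (R := [set v]) (x := x) (y := y) (z := z) hC hB h0).
- uniqt.
- rewrite disjoint_sym disjoints1 !inE !negb_or; uniqt.
- edin.
- edin.
- edin.
- byeqN t1.
- byeqN t2.
- byeqN t3.
Qed.

Lemma P4_link v x1 x2 x3 x4 : edge C v x1 -> edge C v x2 -> edge C v x3 -> edge C v x4 ->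
  x1 != x2 -> x1 != x3 -> x1 != x4 -> x2 != x3 -> x2 != x4 -> x3 != x4 ->
  [set v; x1; x2] \in C -> [set v; x2; x3] \in C -> [set v; x3; x4] \in C ->
  [set v; x1; x3] \notin C -> [set v; x1; x4] \notin C -> [set v; x2; x4] \notin C -> False.
Proof.
move=> e1 e2 e3 e4 n12 n13 n14 n23 n24 n34 t1 t2 t3 t4 t5 t6.
have h0 : [set v] \in C by apply: (hC (edge_in e1)); rewrite sub1set !inE eqxx.
apply: (no_P4 (R := [set v]) (x1 := x1) (x2 := x2) (x3 := x3) (x4 := x4) hC hB h0).
- uniqt.
- rewrite disjoint_sym disjoints1 !inE !negb_or; uniqt.
- byeq t1.
- byeq t2.
- byeq t3.
- byeqN t4.
- byeqN t5.
- byeqN t6.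
Qed.

Lemma apex v a b c d :
  edge C v a -> edge C v b -> edge C v c -> edge C v d ->
  edge C a b -> edge C b c -> edge C c d -> edge C d a ->
  a != c -> ~~ edge C a c -> b != d -> ~~ edge C b d -> [set v; a; b] \in C.
Proof.
move=> va vb vc vd ab bc cd da nac fac nbd fbd.
have h0 : set0 \in C by apply: (hC (edge_in ab)); exact: sub0set.
apply/negPn/negP => tab.
have tac : [set v; a; c] \notin C by nedin hC.
have tbd : [set v; b; d] \notin C by nedin hC.
have tbc : [set v; b; c] \in C.
  apply/negPn/negP => tbc; apply: (ind3_link va vb vc) => //; neqt.
have tda : [set v; d; a] \in C.
  apply/negPn/negP => tda; apply: (ind3_link va vb vd) => //; try neqt; byeqN tda.
have tcd : [set v; c; d] \notin C.
  apply/negP => tcd; apply: (P4_link vb vc vd va); try neqt; try assumption.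
  - byeqN tab.
  - byeqN tac.
apply: (no_J2 (x0 := a) (x1 := b) (x2 := c) (x3 := d) (x4 := v) hC hB h0).
- uniqt.
- exact: edge_in.
- byeq tbc.
- exact: edge_in.
- byeq tda.
- exact: nedge_notin.
- exact: nedge_notin.
- byeqN tab.
- byeqN tcd.
Qed.

Lemma octa p1 q1 p2 q2 p3 q3 :
 p1 != q1 -> ~~ edge C p1 q1 -> p2 != q2 -> ~~ edge C p2 q2 -> p3 != q3 -> ~~ edge C p3 q3 ->
 edge C p1 p2 -> edge C p1 q2 -> edge C q1 p2 -> edge C q1 q2 ->
 edge C p1 p3 -> edge C p1 q3 -> edge C q1 p3 -> edge C q1 q3 ->
 edge C p2 p3 -> edge C p2 q3 -> edge C q2 p3 -> edge C q2 q3 -> False.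
Proof.
move=> n1 f1 n2 f2 n3 f3 e1 e2 e3 e4 e5 e6 e7 e8 e9 e10 e11 e12.
have h0 : set0 \in C by apply: (hC (edge_in e1)); exact: sub0set.
have t1 : [set p3; p1; p2] \in C by apply: (apex (c:=q1) (d:=q2)); closer hC.
have t2 : [set q3; p1; p2] \in C by apply: (apex (c:=q1) (d:=q2)); closer hC.
have t3 : [set p3; p1; q2] \in C by apply: (apex (c:=q1) (d:=p2)); closer hC.
have t4 : [set q3; p1; q2] \in C by apply: (apex (c:=q1) (d:=p2)); closer hC.
have t5 : [set p3; q1; p2] \in C by apply: (apex (c:=p1) (d:=q2)); closer hC.
have t6 : [set q3; q1; p2] \in C by apply: (apex (c:=p1) (d:=q2)); closer hC.
have t7 : [set p3; q1; q2] \in C by apply: (apex (c:=p1) (d:=p2)); closer hC.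
have t8 : [set q3; q1; q2] \in C by apply: (apex (c:=p1) (d:=p2)); closer hC.
apply: (no_O6 (x0 := p1) (x1 := q1) (x2 := p2) (x3 := q2) (x4 := p3) (x5 := q3) hC hB h0);
  try closer hC.
uniqt.
Qed.

Lemma j1shape y x1 x2 z w : y != x1 -> ~~ edge C y x1 -> y != x2 -> ~~ edge C y x2 ->
 z != w -> ~~ edge C z w ->
 edge C x1 x2 -> edge C y z -> edge C y w -> edge C x1 z -> edge C x1 w -> edge C x2 z ->
 edge C x2 w -> False.
Proof.
move=> n1 f1 n2 f2 n3 f3 e1 e2 e3 e4 e5 e6 e7.
have h0 : set0 \in C by apply: (hC (edge_in e1)); exact: sub0set.
have t1 : [set w; x1; x2] \in C.
  apply/negPn/negP => t; apply: (ind3_link (v:=w) (x:=x1) (y:=x2) (z:=y)); closer hC.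
have t2 : [set z; x1; x2] \in C.
  apply/negPn/negP => t; apply: (ind3_link (v:=z) (x:=x1) (y:=x2) (z:=y)); closer hC.
apply: (no_J1 (x0 := y) (x1 := z) (x2 := x1) (x3 := x2) (x4 := w) hC hB h0); try closer hC.
uniqt.
Qed.

Lemma attach a b c d u : a != c -> ~~ edge C a c -> b != d -> ~~ edge C b d ->
  edge C a b -> edge C a d -> edge C c b -> edge C c d ->
  [set u] \in C -> u != a -> u != b -> u != c -> u != d -> edge C u a.
Proof.
move=> nac fac nbd fbd eab ead ecb ecd hu ua ub uc ud.
apply/negPn/negP => fua.
have euc : edge C u c.
  apply/negPn/negP => fuc; apply: (ind3_0 (x:=u) (y:=a) (z:=c)); closer hC.
have eub : edge C u b.
  apply/negPn/negP => fub; apply: (P4_0 (x1:=a) (x2:=b) (x3:=c) (x4:=u)); closer hC.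
have eud : edge C u d.
  apply/negPn/negP => fud; apply: (P4_0 (x1:=a) (x2:=d) (x3:=c) (x4:=u)); closer hC.
apply: (j1shape (y:=a) (x1:=u) (x2:=c) (z:=b) (w:=d)); closer hC.
Qed.

Lemma side x y u v : [set x] \in C -> [set y] \in C -> [set u] \in C -> [set v] \in C ->
  x != y -> ~~ edge C x y -> u != v -> u != x -> u != y -> v != x -> v != y ->
  ~~ edge C u v -> ~~ edge C u y -> ~~ edge C v x.
Proof.
move=> hx hy hu hv nxy fxy nuv ux uy vx vy fuv fuy.
apply/negP => evx.
have evy : edge C v y.
  apply/negPn/negP => fvy; apply: (ind3_0 (x:=u) (y:=v) (z:=y)); closer hC.
have eux : edge C u x.
  apply/negPn/negP => fux; apply: (ind3_0 (x:=u) (y:=x) (z:=y)); closer hC.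
apply: (P4_0 (x1:=u) (x2:=x) (x3:=v) (x4:=y)); closer hC.
Qed.

Lemma cross x y u v : [set x] \in C -> [set y] \in C -> [set u] \in C -> [set v] \in C ->
  x != y -> ~~ edge C x y -> u != v -> u != y -> ~~ edge C u y -> v != x -> ~~ edge C v x ->
  ~~ edge C u v.
Proof.
move=> hx hy hu hv nxy fxy nuv uy fuy vx fvx.
apply/negP => euv.
case: (eqVneq u x) => [eux|ux].
  by move/negP: fvx; apply; rewrite edge_sym -eux.
case: (eqVneq v y) => [evy|vy].
  by move/negP: fuy; apply; rewrite -evy.
have exu : edge C x u.
  apply/negPn/negP => f; apply: (ind3_0 (x:=x) (y:=y) (z:=u)); closer hC.
have evy : edge C v y.
  apply/negPn/negP => f; apply: (ind3_0 (x:=v) (y:=x) (z:=y)); closer hC.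
apply: (P4_0 (x1:=x) (x2:=u) (x3:=v) (x4:=y)); closer hC.
Qed.
End G.

Ltac boolclose hC := repeat (apply/andP; split); closer hC.

Unset Implicit Arguments.
Theorem lemma5p3 (V : finType) (C : {set {set V}}) :
  is_complex C -> beta_avoiding C ->
  let N := nonghost C in
  (* (a) complete graph *)
  (forall u v, u \in N -> v \in N -> u != v -> edge C u v)
  \/
  (* (b) two complete graphs on A and B glued along the clique A :&: B *)
  (exists A B : {set V}, A :|: B = N /\
     forall u v, u \in N -> v \in N -> u != v ->
       (edge C u v <-> (u \in A /\ v \in A) \/ (u \in B /\ v \in B)))
  \/
  (* (c) join of the 4-cycle a-b-c-d-a with the complete graph on N \ {a,b,c,d} *)
  (exists a b c d : V, [/\ a \in N, b \in N, c \in N & d \in N] /\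
     uniq [:: a; b; c; d] /\
     forall u v, u \in N -> v \in N -> u != v ->
       (edge C u v <-> ~ ([set u; v] = [set a; c] \/ [set u; v] = [set b; d]))).
Proof.
move=> hC hB N; rewrite {}/N.
have memN : forall u, (u \in nonghost C) = ([set u] \in C) by move=> u; rewrite inE.
case: (boolP [forall u, forall v, ([set u] \in C) ==> ([set v] \in C) ==> (u != v) ==> edge C u v])
  => [hall|hnall].
  left; move=> u v; rewrite !memN => hu hv nuv.
  by move/forallP: hall => /(_ u)/forallP/(_ v); rewrite hu hv nuv.
have [x [y [hx hy nxy fxy]]] : exists x y, [/\ [set x] \in C, [set y] \in C, x != y & ~~ edge C x y].
  move/forallPn: hnall => [x /forallPn [y]].
  rewrite !negb_imply => /andP[hx /andP[hy /andP[nxy fxy]]].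
  by exists x, y.
right.
case: (boolP [exists a, exists b, exists c, exists d, [&& a != c, ~~ edge C a c, b != d,
   ~~ edge C b d, edge C a b, edge C a d, edge C c b & edge C c d]]) => [h2|hn2].
- right.
  case/existsP: h2 => a /existsP[b /existsP[c /existsP[d]]].
  move=> /andP[nac /andP[fac /andP[nbd /andP[fbd /andP[eab /andP[ead /andP[ecb ecd]]]]]]].
  exists a, b, c, d; split; first by rewrite !memN; split; closer hC.
  split; first by uniqt.
  move=> u v; rewrite !memN => hu hv nuv; split.
    by move=> euv [E|E]; move: euv; rewrite /edge E ?(negbTE (nedge_notin nac fac)) ?(negbTE (nedge_notin nbd fbd)) andbF.
  move=> hnot; apply/negPn/negP => fuv; apply: hnot.
  have At : forall w, [set w] \in C -> w != a -> w != b -> w != c -> w != d ->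
      [/\ edge C w a, edge C w b, edge C w c & edge C w d].
    move=> w hw wa wb wc wd; split.
    - apply: (attach hC hB (a:=a) (b:=b) (c:=c) (d:=d)); closer hC.
    - apply: (attach hC hB (a:=b) (b:=a) (c:=d) (d:=c)); closer hC.
    - apply: (attach hC hB (a:=c) (b:=b) (c:=a) (d:=d)); closer hC.
    - apply: (attach hC hB (a:=d) (b:=a) (c:=b) (d:=c)); closer hC.
  have hU : (u == a) || (u == b) || (u == c) || (u == d) || [&& u != a, u != b, u != c & u != d].
    by case: (u == a); case: (u == b); case: (u == c); case: (u == d).
  have hV : (v == a) || (v == b) || (v == c) || (v == d) || [&& v != a, v != b, v != c & v != d].
    by case: (v == a); case: (v == b); case: (v == c); case: (v == d).
  case/orP: hU => [/orP[/orP[/orP[/eqP eu|/eqP eu]|/eqP eu]|/eqP eu]|/and4P[ua ub uc ud]];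
   try subst u;
   try (have [ua' ub' uc' ud'] := At u hu ua ub uc ud);
   (case/orP: hV => [/orP[/orP[/orP[/eqP ev|/eqP ev]|/eqP ev]|/eqP ev]|/and4P[va vb vc vd]];
   try subst v;
   try (have [va' vb' vc' vd'] := At v hv va vb vc vd));
   try (by left; setsolve); try (by right; setsolve); try (by rewrite eqxx in nuv);
   try (by exfalso; move/negP: fuv; apply; esolve).
  exfalso; apply: (octa hC hB (p1:=u) (q1:=v) (p2:=a) (q2:=c) (p3:=b) (q3:=d)); closer hC.
- left.
  have no2 : forall a b c d, ~~ [&& a != c, ~~ edge C a c, b != d,
      ~~ edge C b d, edge C a b, edge C a d, edge C c b & edge C c d].
    move=> a b c d; apply/negP => h; move/negP: hn2; apply.
    by apply/existsP; exists a; apply/existsP; exists b; apply/existsP; exists c;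
       apply/existsP; exists d.
  set X := [set w | [&& [set w] \in C, w != y & ~~ edge C w y]].
  set Y := [set w | [&& [set w] \in C, w != x & ~~ edge C w x]].
  exists (nonghost C :\: Y), (nonghost C :\: X); split.
    apply/setP => z; rewrite !inE.
    case: (boolP ([set z] \in C)) => hz; rewrite ?andbF //= !andbT.
    apply/negPn/negP; rewrite negb_or !negbK => /andP[/andP[zx fzx] /andP[zy fzy]].
    apply: (ind3_0 hC hB (x:=z) (y:=x) (z:=y)); closer hC.
  move=> u v; rewrite !memN => hu hv nuv.
  have L : ~~ edge C u v ->
      ((u != y) && ~~ edge C u y) && ((v != x) && ~~ edge C v x) ||
      ((u != x) && ~~ edge C u x) && ((v != y) && ~~ edge C v y).
    move=> fuv.
    case: (eqVneq u x) => [eux|ux].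
      subst u; apply/orP; left; boolclose hC.
    case: (eqVneq u y) => [euy|uy].
      subst u; apply/orP; right; boolclose hC.
    case: (eqVneq v x) => [evx|vx].
      subst v; apply/orP; right; boolclose hC.
    case: (eqVneq v y) => [evy|vy].
      subst v; apply/orP; left; boolclose hC.
    case: (boolP (edge C u y)) => euy; last first.
      have := side hC hB hx hy hu hv nxy fxy nuv ux uy vx vy fuv euy.
      by move=> h; apply/orP; left; boolclose hC.
    case: (boolP (edge C u x)) => eux; last first.
      have := side hC hB (x:=y) (y:=x) hy hx hu hv; move=> h.
      have {}h : ~~ edge C v y by apply: h; closer hC.
      by apply/orP; right; boolclose hC.
    case: (boolP (edge C v y)) => evy; last first.
      have := side hC hB (u:=v) (v:=u) hx hy hv hu; move=> h.
      have {}h : ~~ edge C u x by apply: h; closer hC.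
      by rewrite eux in h.
    case: (boolP (edge C v x)) => evx; last first.
      have := side hC hB (x:=y) (y:=x) (u:=v) (v:=u) hy hx hv hu; move=> h.
      have {}h : ~~ edge C u y by apply: h; closer hC.
      by rewrite euy in h.
    exfalso; move/negP: (no2 u x v y); apply; boolclose hC.
  have R1 : ((u != y) && ~~ edge C u y) && ((v != x) && ~~ edge C v x) -> ~~ edge C u v.
    case/andP => /andP[uy fuy] /andP[vx fvx].
    exact: (cross hC hB hx hy hu hv nxy fxy nuv uy fuy vx fvx).
  have R2 : ((u != x) && ~~ edge C u x) && ((v != y) && ~~ edge C v y) -> ~~ edge C u v.
    case/andP => /andP[ux fux] /andP[vy fvy].
    apply: (cross hC hB (x:=y) (y:=x) hy hx hu hv); closer hC.
  have du : ~~ (((u != y) && ~~ edge C u y) && ((u != x) && ~~ edge C u x)).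
    apply/negP => /andP[/andP[uy fuy] /andP[ux fux]].
    apply: (ind3_0 hC hB (x:=u) (y:=x) (z:=y)); closer hC.
  have dv : ~~ (((v != y) && ~~ edge C v y) && ((v != x) && ~~ edge C v x)).
    apply/negP => /andP[/andP[uy fuy] /andP[ux fux]].
    apply: (ind3_0 hC hB (x:=v) (y:=x) (z:=y)); closer hC.
  rewrite !inE hu hv /=.
  move: L R1 R2 du dv.
  move: (edge C u v) ((u != y) && ~~ edge C u y) ((v != x) && ~~ edge C v x)
        ((u != x) && ~~ edge C u x) ((v != y) && ~~ edge C v y).
  case; case; case; case; case => //=; intuition.
Qed.
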